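(* Let $f:[0,T]\times\mathbb{R}\times\mathbb{R}\to\mathbb{R}$ be continuous and suppose there is a constant $c$ with $|f(t,x,y)|\le c<\frac{a}{2T}$ for all $(t,x,y)\in[0,T]\times\mathbb{R}\times\mathbb{R}$. Then the problem $$(\varphi(u'))'=f(t,u,u')\ \text{on }[0,T],\qquad u(T)=u(0)=u'(T)$$ has at least one solution.
   Context: $T>0$, $a>0$, and $\varphi:\mathbb{R}\to(-a,a)$ is a homeomorphism with $\varphi(0)=0$. A solution is a function $u\in C^1([0,T],\mathbb{R})$ satisfying the boundary conditions such that $\varphi\circ u'$ is continuously differentiable and the equation holds for all $t\in[0,T]$. *)

(* Defs.v *)
From Stdlib Require Import Reals Lra.
Open Scope R_scope.

Definition continuous_on_interval (g : R -> R) (a b : R) : Prop :=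
  forall t, a <= t <= b ->
  forall eps, 0 < eps -> exists delta, 0 < delta /\
    forall s, a <= s <= b -> Rabs (s - t) < delta -> Rabs (g s - g t) < eps.

Definition has_derivative_on_interval (g g' : R -> R) (a b : R) : Prop :=
  forall t, a <= t <= b ->
  forall eps, 0 < eps -> exists delta, 0 < delta /\
    forall s, a <= s <= b -> s <> t -> Rabs (s - t) < delta ->
      Rabs ((g s - g t) / (s - t) - g' t) < eps.

Definition homeomorphism_onto_interval (phi : R -> R) (a : R) : Prop :=
  continuity phi /\
  (forall x, - a < phi x < a) /\
  exists psi : R -> R,
    (forall x, psi (phi x) = x) /\
    (forall y, - a < y < a -> phi (psi y) = y) /\
    (forall y, - a < y < a -> continuity_pt psi y).

Definition continuous_on_strip (f : R -> R -> R -> R) (T : R) : Prop :=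
  forall t x y, 0 <= t <= T ->
  forall eps, 0 < eps -> exists delta, 0 < delta /\
    forall t' x' y', 0 <= t' <= T -> Rabs (t' - t) < delta ->
      Rabs (x' - x) < delta -> Rabs (y' - y) < delta ->
      Rabs (f t' x' y' - f t x y) < eps.

Definition is_solution (phi : R -> R) (f : R -> R -> R -> R) (T : R)
    (u : R -> R) : Prop :=
  exists du w : R -> R,
    has_derivative_on_interval u du 0 T /\
    continuous_on_interval du 0 T /\
    has_derivative_on_interval (fun t => phi (du t)) w 0 T /\
    continuous_on_interval w 0 T /\
    (forall t, 0 <= t <= T -> w t = f t (u t) (du t)) /\
    u T = u 0 /\ u 0 = du T.

(* Main.v *)
Require Import Defs.
From Stdlib Require Import Reals.
From Stdlib Require Import Lra Lia ZArith ClassicalEpsilon.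
From HB Require Import structures.
From mathcomp Require all_boot all_order all_algebra.
From mathcomp Require all_classical all_reals all_analysis.
From mathcomp Require Rstruct Rstruct_topology.

Module Clu.
Import all_boot all_order all_algebra all_classical all_reals all_analysis Rstruct Rstruct_topology.
Import Order.TTheory GRing.Theory Num.Theory.
Import numFieldNormedType.Exports.
Import ArrowAsProduct.
Local Open Scope classical_set_scope.
Local Open Scope ring_scope.

Lemma cluster_exists0 (I : eqType) (g : nat -> I -> R) (M : R) :
  (forall n i, Rle (Rabs (g n i)) M) ->
  exists p : I -> R, forall (i j i' j' : I) (eps : R) (N0 : nat), Rlt 0 eps ->
    exists n, (N0 <= n)%N /\ Rlt (Rabs (Rminus (g n i) (p i))) eps /\ Rlt (Rabs (Rminus (g n j) (p j))) eps
      /\ Rlt (Rabs (Rminus (g n i') (p i'))) eps /\ Rlt (Rabs (Rminus (g n j') (p j'))) eps.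
Proof.
move=> gM.
have cK := @tychonoff I (fun _ => R) (fun _ => `[-M, M]%classic) (fun _ => @segment_compact R (-M) M).
set K := [set f : forall i : I, R | forall i : I, `[-M, M]%classic (f i)] in cK.
pose G : nat -> (forall i : I, R) := g.
have FP : ProperFilter (G @ \oo).
  apply: fmap_proper_filter.
have FK : (G @ \oo) K.
  apply: (@filterE _ _ _ (G @^-1` K)) => n i /=.
  have h0 := gM n i; have h1 := Rle_abs (g n i); have h2 := Rle_abs (Ropp (g n i)); rewrite Rabs_Ropp in h2; rewrite in_itv /=; apply/andP; split; apply/RleP; rewrite /G; change (- M)%R with (Ropp M); lra.
have [p [Kp clp]] := cK _ FP FK.
exists p => i j i' j' eps N0 eps0.
have nb : forall k, nbhs p [set f : I -> R | Rlt (Rabs (Rminus (f k) (p k))) eps].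
  move=> k; have e0 : (0 < eps)%R := introT RltP eps0.
  have := @proj_continuous I (fun _ => R) k p _ (nbhsx_ballx (p k) eps e0).
  move=> H. have H2 : nbhs p ((@proj I (fun _ => R) k) @^-1` ball (p k) eps) := H.
  apply: filterS H2 => f /=. rewrite /ball /= /proj. move=> /RltP h; rewrite Rabs_minus_sym; exact h.
have nbij := @filterI _ _ (nbhs_filter p) _ _ (@filterI _ _ (nbhs_filter p) _ _ (nb i) (nb j))
   (@filterI _ _ (nbhs_filter p) _ _ (nb i') (nb j')).
have FA : (G @ \oo) (G @` [set n | (N0 <= n)%N]).
  have := nbhs_infty_ge N0; apply: filterS => n hn /=; by exists n.
have [f [[n hn <-] [[h1 h2] [h3 h4]]]] := clp _ _ FA nbij.
by exists n.
Qed.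

Lemma cluster_exists (g : nat -> bool * R -> R) (M : R) :
  (forall n i, Rle (Rabs (g n i)) M) ->
  exists p : bool * R -> R, forall (i j i' j' : bool * R) (eps : R) (N0 : nat), Rlt 0 eps ->
    exists n, (N0 <= n)%coq_nat /\ Rlt (Rabs (Rminus (g n i) (p i))) eps /\ Rlt (Rabs (Rminus (g n j) (p j))) eps
      /\ Rlt (Rabs (Rminus (g n i') (p i'))) eps /\ Rlt (Rabs (Rminus (g n j') (p j'))) eps.
Proof.
move=> gM; have [p hp] := @cluster_exists0 _ g M gM.
exists p => i j i' j' eps N0 e0; have [n [hn H]] := hp i j i' j' eps N0 e0.
by exists n; split => //; apply/ssrnat.leP.
Qed.
End Clu.


Open Scope R_scope.

Ltac rabs := repeat (match goal with
  | |- context [Rabs ?x] => unfold Rabs at 1; destruct (Rcase_abs x)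
  | H : context [Rabs ?x] |- _ => unfold Rabs in H; destruct (Rcase_abs x)
  end); try lra.

Lemma cont_pt_intro (g : R -> R) x :
  (forall eps, 0 < eps -> exists d, 0 < d /\ forall y, Rabs (y - x) < d -> Rabs (g y - g x) < eps) ->
  continuity_pt g x.
Proof.
intros H eps Heps. destruct (H eps Heps) as [d [Hd Hy]].
exists d; split; [lra|]. intros y [_ Hy2]. simpl in *. unfold R_dist in *. now apply Hy.
Qed.

Lemma cont_pt_elim (g : R -> R) x : continuity_pt g x ->
  forall eps, 0 < eps -> exists d, 0 < d /\ forall y, Rabs (y - x) < d -> Rabs (g y - g x) < eps.
Proof.
intros H eps Heps. destruct (H eps Heps) as [d [Hd Hy]].
exists d; split; [lra|]. intros y Hyx.
destruct (Req_dec y x) as [->|Hne].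
- replace (g x - g x) with 0 by ring. rewrite Rabs_R0. lra.
- apply (Hy y). split. split; [exact I| auto]. simpl; unfold R_dist; exact Hyx.
Qed.

Definition clamp (lo hi x : R) := Rmax lo (Rmin hi x).

Lemma clamp_lip lo hi x y : lo <= hi -> Rabs (clamp lo hi x - clamp lo hi y) <= Rabs (x - y).
Proof. intros. unfold clamp, Rmax, Rmin. repeat destruct Rle_dec; rabs. Qed.

Lemma clamp_in lo hi x : lo <= hi -> lo <= clamp lo hi x <= hi.
Proof. intros. unfold clamp, Rmax, Rmin. repeat destruct Rle_dec; lra. Qed.

Lemma clamp_id lo hi x : lo <= x <= hi -> clamp lo hi x = x.
Proof. intros. unfold clamp, Rmax, Rmin. repeat destruct Rle_dec; lra. Qed.

Lemma cont2 (g1 g2 : R -> R) (P : R -> R -> R) :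
  continuity g1 -> continuity g2 ->
  (forall a b eps, 0 < eps -> exists d, 0 < d /\ forall a' b', Rabs (a' - a) < d -> Rabs (b' - b) < d ->
      Rabs (P a' b' - P a b) < eps) ->
  continuity (fun w => P (g1 w) (g2 w)).
Proof.
intros c1 c2 HP x. apply cont_pt_intro. intros eps Heps.
destruct (HP (g1 x) (g2 x) eps Heps) as [d [Hd Hd']].
destruct (cont_pt_elim _ _ (c1 x) d Hd) as [d1 [Hd1 H1]].
destruct (cont_pt_elim _ _ (c2 x) d Hd) as [d2 [Hd2 H2]].
exists (Rmin d1 d2). split. apply Rmin_pos; auto.
intros y Hy. apply Hd'. apply H1. eapply Rlt_le_trans; [exact Hy| apply Rmin_l].
apply H2. eapply Rlt_le_trans; [exact Hy| apply Rmin_r].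
Qed.

Lemma sum_lemma (X Y : nat -> R) (h D e : R) (k0 : nat) :
  0 <= h -> (forall j, X (S j) = X j - h * Y j) ->
  forall m, (forall j, (k0 <= j < k0 + m)%nat -> Rabs (Y j - D) <= e) ->
  Rabs (X k0 - X (k0 + m)%nat - INR m * h * D) <= INR m * h * e.
Proof.
intros Hh HX m. induction m as [|m IH]; intros HY.
- rewrite Nat.add_0_r. simpl. replace (X k0 - X k0 - 0 * h * D) with 0 by ring. rewrite Rabs_R0; lra.
- rewrite Nat.add_succ_r, HX, S_INR.
  assert (IH' := IH (fun j Hj => HY j ltac:(lia))).
  assert (Hy := HY (k0 + m)%nat ltac:(lia)).
  replace (X k0 - (X (k0 + m)%nat - h * Y (k0 + m)%nat) - (INR m + 1) * h * D)
    with ((X k0 - X (k0 + m)%nat - INR m * h * D) + h * (Y (k0 + m)%nat - D)) by ring.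
  eapply Rle_trans; [apply Rabs_triang|]. rewrite Rabs_mult, (Rabs_pos_eq h Hh).
  assert (h * Rabs (Y (k0 + m)%nat - D) <= h * e) by (apply Rmult_le_compat_l; auto). nra.
Qed.

Lemma diff_lemma (X : nat -> R) (L : R) :
  (forall j, Rabs (X (S j) - X j) <= L) ->
  forall k0 m, Rabs (X (k0 + m)%nat - X k0) <= INR m * L.
Proof.
intros H k0 m. induction m as [|m IH].
- rewrite Nat.add_0_r. replace (X k0 - X k0) with 0 by ring. rewrite Rabs_R0. simpl; lra.
- rewrite Nat.add_succ_r, S_INR.
  replace (X (S (k0 + m)) - X k0) with ((X (S (k0+m)) - X (k0 + m)%nat) + (X (k0+m)%nat - X k0)) by ring.
  eapply Rle_trans; [apply Rabs_triang|]. specialize (H (k0+m)%nat). lra.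
Qed.

Definition idx (T h s : R) (n : nat) : nat := Nat.min n (Z.to_nat (Int_part ((T - s) / h))).

Lemma idx_spec T h n s : 0 < h -> h * INR n = T -> 0 <= s <= T ->
  (idx T h s n <= n)%nat /\ INR (idx T h s n) * h <= T - s < (INR (idx T h s n) + 1) * h.
Proof.
intros Hh HT Hs. unfold idx.
set (r := (T - s) / h).
assert (Hr0 : 0 <= r) by (unfold r; apply Rle_mult_inv_pos; lra).
assert (Hrn : r <= INR n).
{ unfold r. apply (Rmult_le_reg_r h); [lra|]. unfold Rdiv. rewrite Rmult_assoc, Rinv_l by lra. lra. }
destruct (base_Int_part r) as [B1 B2].
assert (Hz : (0 <= Int_part r)%Z).
{ apply le_IZR. assert (IZR (Int_part r) > -1) by lra.
  destruct (Z_lt_le_dec (Int_part r) 0) as [Hl|Hl]; [|apply IZR_le in Hl; lra].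
  assert (Int_part r <= -1)%Z by lia. apply IZR_le in H0. lra. }
assert (HI : INR (Z.to_nat (Int_part r)) = IZR (Int_part r)).
{ rewrite INR_IZR_INZ, Z2Nat.id by lia. reflexivity. }
assert (Hle : (Z.to_nat (Int_part r) <= n)%nat).
{ apply INR_le. lra. }
rewrite Nat.min_r by exact Hle. split; [exact Hle|]. rewrite HI.
assert (E : T - s = r * h) by (unfold r; field; lra).
rewrite E. split; nra.
Qed.

Lemma abs_sub x y : Rabs (x - y) <= Rabs x + Rabs y.
Proof. rabs. Qed.

Lemma abs_le x y : Rabs x <= y -> - y <= x <= y.
Proof. rabs. Qed.

Lemma abs_lt x y : Rabs x < y -> - y < x < y.
Proof. rabs. Qed.

Lemma le_abs x y : - y <= x <= y -> Rabs x <= y.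
Proof. rabs. Qed.

Lemma lt_abs x y : - y < x < y -> Rabs x < y.
Proof. rabs. Qed.

Lemma gen_diff (X : nat -> R) (L : R) :
  (forall j, Rabs (X (S j) - X j) <= L) ->
  forall k j, Rabs (X k - X j) <= Rabs (INR k - INR j) * L.
Proof.
intros H k j. destruct (le_ge_dec j k) as [Hl|Hl].
- replace k with (j + (k - j))%nat at 1 by lia.
  rewrite <- minus_INR by lia. rewrite (Rabs_pos_eq (INR _)) by apply pos_INR.
  apply diff_lemma; auto.
- replace j with (k + (j - k))%nat at 1 by lia.
  rewrite Rabs_minus_sym. rewrite (Rabs_minus_sym (INR k)).
  rewrite <- minus_INR by lia. rewrite (Rabs_pos_eq (INR _)) by apply pos_INR.
  apply diff_lemma; auto.
Qed.

Lemma small_h (T eps : R) : 0 < T -> 0 < eps -> exists N0 : nat, T / INR (S N0) < eps.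
Proof.
intros HT He. destruct (archimed (T / eps)) as [H1 _].
assert (Hp : 0 < T / eps) by (apply Rdiv_lt_0_compat; lra).
assert (Hz : (0 <= up (T / eps))%Z).
{ destruct (Z_lt_le_dec (up (T/eps)) 0) as [Hl|Hl]; auto. apply IZR_lt in Hl. lra. }
exists (Z.to_nat (up (T / eps))).
rewrite S_INR, INR_IZR_INZ, Z2Nat.id by lia.
apply (Rmult_lt_reg_r (IZR (up (T / eps)) + 1)); [lra|].
unfold Rdiv at 1. rewrite Rmult_assoc, Rinv_l by lra.
assert (T = (T / eps) * eps) by (field; lra).
assert (T / eps * eps < (IZR (up (T / eps)) + 1) * eps) by (apply Rmult_lt_compat_r; lra). lra.
Qed.

Lemma idx_dist (T h s t : R) (ks kt : nat) :
  INR ks * h <= T - s < (INR ks + 1) * h ->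
  INR kt * h <= T - t < (INR kt + 1) * h ->
  Rabs (INR kt - INR ks) * h < Rabs (t - s) + h /\
  Rabs ((INR ks - INR kt) * h - (t - s)) < h.
Proof.
intros Hs Ht. assert (0 < h) by nra.
rewrite <- (Rabs_pos_eq h) at 1 by lra. rewrite <- Rabs_mult.
rewrite !Rmult_minus_distr_r. rewrite !Rmult_plus_distr_r, !Rmult_1_l in *.
split; apply lt_abs; rabs.
Qed.

Lemma deriv_core (X Y : nat -> R) (x : R -> R) (D L h s t eps eta T : R) (ks kt : nat) :
 0 < h -> 0 <= eps -> Rabs D <= L ->
 (forall j, X (S j) = X j - h * Y j) ->
 (forall j, (Nat.min ks kt <= j < Nat.max ks kt)%nat -> Rabs (Y j - D) <= eps) ->
 INR ks * h <= T - s < (INR ks + 1) * h ->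
 INR kt * h <= T - t < (INR kt + 1) * h ->
 Rabs (X ks - x s) < eta -> Rabs (X kt - x t) < eta ->
 Rabs (x t - x s - D * (t - s)) <= 2 * eta + (Rabs (t - s) + h) * eps + L * h.
Proof.
intros Hh He HD HX HY Hs Ht H1 H2.
destruct (idx_dist T h s t ks kt Hs Ht) as [I1 I2].
assert (HL : 0 <= L) by (pose proof (Rabs_pos D); lra).
destruct (le_ge_dec kt ks) as [Hl|Hl].
- assert (Hsum := sum_lemma X Y h D eps kt ltac:(lra) HX (ks - kt)
     ltac:(intros j Hj; apply HY; rewrite Nat.min_r, Nat.max_l by lia; lia)).
  replace (kt + (ks - kt))%nat with ks in Hsum by lia.
  rewrite minus_INR in Hsum by lia.
  set (m := (INR ks - INR kt) * h) in *.
  assert (Hm : Rabs m < Rabs (t - s) + h).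
  { unfold m. rewrite Rabs_mult, (Rabs_pos_eq h) by lra. rewrite Rabs_minus_sym. exact I1. }
  replace ((INR ks - INR kt) * h * D) with (m * D) in Hsum by (unfold m; ring).
  replace ((INR ks - INR kt) * h * eps) with (m * eps) in Hsum by (unfold m; ring).
  replace (x t - x s - D * (t - s)) with
    ((x t - X kt) + (X ks - x s) + (X kt - X ks - m * D) + D * (m - (t - s))) by ring.
  assert (Rabs (D * (m - (t - s))) <= L * h).
  { rewrite Rabs_mult. apply Rmult_le_compat; try apply Rabs_pos; lra. }
  assert (m * eps <= (Rabs (t - s) + h) * eps).
  { apply Rmult_le_compat_r; auto. apply Rle_trans with (Rabs m); [apply Rle_abs| lra]. }
  assert (Rabs (x t - X kt) < eta) by (rewrite Rabs_minus_sym; exact H2).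
  eapply Rle_trans; [apply Rabs_triang|].
  eapply Rle_trans; [apply Rplus_le_compat_r; apply Rabs_triang|].
  eapply Rle_trans; [apply Rplus_le_compat_r; apply Rplus_le_compat_r; apply Rabs_triang|]. lra.
- assert (Hsum := sum_lemma X Y h D eps ks ltac:(lra) HX (kt - ks)
     ltac:(intros j Hj; apply HY; rewrite Nat.min_l, Nat.max_r by lia; lia)).
  replace (ks + (kt - ks))%nat with kt in Hsum by lia.
  rewrite minus_INR in Hsum by lia.
  set (m := (INR kt - INR ks) * h) in *.
  assert (Hm : Rabs m < Rabs (t - s) + h).
  { unfold m. rewrite Rabs_mult, (Rabs_pos_eq h) by lra. exact I1. }
  replace ((INR kt - INR ks) * h * D) with (m * D) in Hsum by (unfold m; ring).
  replace ((INR kt - INR ks) * h * eps) with (m * eps) in Hsum by (unfold m; ring).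
  replace (x t - x s - D * (t - s)) with
    ((x t - X kt) + (X ks - x s) - (X ks - X kt - m * D) + D * (- m - (t - s))) by ring.
  assert (Rabs (D * (- m - (t - s))) <= L * h).
  { rewrite Rabs_mult. apply Rmult_le_compat; try apply Rabs_pos; try lra.
    replace (- m - (t - s)) with ((INR ks - INR kt) * h - (t - s)) by (unfold m; ring). lra. }
  assert (m * eps <= (Rabs (t - s) + h) * eps).
  { apply Rmult_le_compat_r; auto. apply Rle_trans with (Rabs m); [apply Rle_abs| lra]. }
  assert (Rabs (x t - X kt) < eta) by (rewrite Rabs_minus_sym; exact H2).
  eapply Rle_trans; [apply Rabs_triang|].
  eapply Rle_trans; [apply Rplus_le_compat_r; apply abs_sub|].
  eapply Rle_trans; [apply Rplus_le_compat_r; apply Rplus_le_compat_r; apply Rabs_triang|]. lra.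
Qed.

Lemma between_facts (T h s t : R) (ks kt j : nat) :
  INR ks * h <= T - s < (INR ks + 1) * h ->
  INR kt * h <= T - t < (INR kt + 1) * h ->
  (Nat.min ks kt <= j <= Nat.max ks kt)%nat ->
  Rabs (INR j - INR ks) * h < Rabs (t - s) + h /\ Rabs (T - INR j * h - s) < Rabs (t - s) + 2 * h.
Proof.
intros Hs Ht Hj. destruct (idx_dist T h s t ks kt Hs Ht) as [I1 _].
assert (0 < h) by nra.
assert (Rabs (INR j - INR ks) <= Rabs (INR kt - INR ks)).
{ destruct (le_ge_dec kt ks).
  - rewrite Nat.min_r, Nat.max_l in Hj by lia. destruct Hj as [Hj1 Hj2].
    apply le_INR in Hj1. apply le_INR in Hj2. rabs.
  - rewrite Nat.min_l, Nat.max_r in Hj by lia. destruct Hj as [Hj1 Hj2].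
    apply le_INR in Hj1. apply le_INR in Hj2. rabs. }
assert (A : Rabs (INR j - INR ks) * h < Rabs (t - s) + h).
{ apply Rle_lt_trans with (Rabs (INR kt - INR ks) * h); auto. apply Rmult_le_compat_r; lra. }
split; auto.
assert (A' : Rabs ((INR j - INR ks) * h) = Rabs (INR j - INR ks) * h).
{ rewrite Rabs_mult, (Rabs_pos_eq h) by lra. reflexivity. }
replace (T - INR j * h - s) with ((T - s - INR ks * h) - (INR j - INR ks) * h) by ring.
eapply Rle_lt_trans; [apply abs_sub|]. rewrite (Rabs_pos_eq (T - s - INR ks * h)) by lra. lra.
Qed.

Lemma quot_bound A D t s eps : t <> s -> Rabs (A - D * (t - s)) < eps * Rabs (t - s) ->
  Rabs (A / (t - s) - D) < eps.
Proof.
intros Hne H. assert (Hd : t - s <> 0) by lra.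
replace (A / (t - s) - D) with ((A - D * (t - s)) / (t - s)) by (field; auto).
unfold Rdiv. rewrite Rabs_mult, Rabs_inv.
assert (0 < Rabs (t - s)) by (apply Rabs_pos_lt; auto).
apply (Rmult_lt_reg_r (Rabs (t - s))); auto.
rewrite Rmult_assoc, Rinv_l by lra. lra.
Qed.

Lemma abs_small x : (forall e, 0 < e -> Rabs x <= e) -> x = 0.
Proof.
intros H. destruct (Req_dec x 0) as [|Hx]; auto.
assert (0 < Rabs x) by (apply Rabs_pos_lt; auto).
specialize (H (Rabs x / 2) ltac:(lra)). lra.
Qed.


Section Core.
Variables (T c K sg : R) (F : R -> R -> R -> R) (Ps : R -> R).
Hypothesis HT : 0 < T.
Hypothesis Hc : 0 <= c.
Hypothesis HK : 0 <= K.
Hypothesis HF : forall t x y, Rabs (F t x y) <= c.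
Hypothesis HFc : forall t x y eps, 0 < eps -> exists d, 0 < d /\ forall t' x' y',
  Rabs (t' - t) < d -> Rabs (x' - x) < d -> Rabs (y' - y) < d -> Rabs (F t' x' y' - F t x y) < eps.
Hypothesis HP : forall v, Rabs (Ps v) <= K.
Hypothesis HPc : continuity Ps.
Hypothesis Hsg : sg <> 0.
Hypothesis Hs1 : forall v, 0 <= v <= 2 * c * T -> 0 <= sg * Ps v.
Hypothesis Hs2 : forall v, - (2 * c * T) <= v <= 0 -> sg * Ps v <= 0.

Fixpoint UV (h w : R) (k : nat) : R * R :=
  match k with
  | O => (Ps w, w)
  | S k' => let p := UV h w k' in
      (fst p - h * Ps (snd p), snd p - h * F (T - INR k' * h) (fst p) (Ps (snd p)))
  end.

Lemma UV_cont h k : continuity (fun w => fst (UV h w k)) /\ continuity (fun w => snd (UV h w k)).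
Proof.
induction k as [|k [IH1 IH2]]; simpl.
- split; [exact HPc|]. intro x; apply cont_pt_intro; intros eps He; exists eps; split; auto.
- split.
  + apply (cont2 _ _ (fun a b => a - h * Ps b)); auto.
    intros a b eps Heps.
    destruct (cont_pt_elim _ _ (HPc b) (eps / (2 * (Rabs h + 1)))) as [d [Hd Hd']].
    { apply Rdiv_lt_0_compat; [lra|]. pose proof (Rabs_pos h); lra. }
    exists (Rmin d (eps/2)). split. apply Rmin_pos; lra.
    intros a' b' Ha Hb. assert (Ha' : Rabs (a' - a) < eps/2) by (eapply Rlt_le_trans; [exact Ha|apply Rmin_r]).
    assert (Hb' := Hd' b' (Rlt_le_trans _ _ _ Hb (Rmin_l _ _))).
    replace (a' - h * Ps b' - (a - h * Ps b)) with ((a' - a) - h * (Ps b' - Ps b)) by ring.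
    eapply Rle_lt_trans; [apply abs_sub|]. rewrite Rabs_mult.
    assert (Rabs h * Rabs (Ps b' - Ps b) <= Rabs h * (eps / (2 * (Rabs h + 1)))).
    { apply Rmult_le_compat_l; [apply Rabs_pos| lra]. }
    assert (Rabs h * (eps / (2 * (Rabs h + 1))) <= eps / 2).
    { pose proof (Rabs_pos h). unfold Rdiv. apply (Rmult_le_reg_r (2 * (Rabs h + 1))); [lra|].
      rewrite Rmult_assoc, Rmult_assoc, Rinv_l by lra. nra. }
    lra.
  + apply (cont2 _ _ (fun a b => b - h * F (T - INR k * h) a (Ps b))); auto.
    intros a b eps Heps.
    set (e1 := eps / (2 * (Rabs h + 1))).
    assert (He1 : 0 < e1). { unfold e1. apply Rdiv_lt_0_compat; [lra|]. pose proof (Rabs_pos h); lra. }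
    destruct (HFc (T - INR k * h) a (Ps b) e1 He1) as [d1 [Hd1 Hd1']].
    destruct (cont_pt_elim _ _ (HPc b) d1 Hd1) as [d [Hd Hd']].
    exists (Rmin (Rmin d d1) (eps/2)). split. repeat apply Rmin_pos; lra.
    intros a' b' Ha Hb.
    assert (Hb1 : Rabs (b' - b) < eps/2) by (eapply Rlt_le_trans; [exact Hb|apply Rmin_r]).
    assert (Hb2 : Rabs (b' - b) < d) by (eapply Rlt_le_trans; [exact Hb|]; eapply Rle_trans; [apply Rmin_l|apply Rmin_l]).
    assert (Ha2 : Rabs (a' - a) < d1) by (eapply Rlt_le_trans; [exact Ha|]; eapply Rle_trans; [apply Rmin_l|apply Rmin_r]).
    assert (HF1 : Rabs (F (T - INR k * h) a' (Ps b') - F (T - INR k * h) a (Ps b)) < e1).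
    { apply Hd1'; auto. replace (T - INR k * h - (T - INR k * h)) with 0 by ring. rewrite Rabs_R0; lra. }
    replace (b' - h * F (T - INR k * h) a' (Ps b') - (b - h * F (T - INR k * h) a (Ps b)))
      with ((b' - b) - h * (F (T - INR k * h) a' (Ps b') - F (T - INR k * h) a (Ps b))) by ring.
    eapply Rle_lt_trans; [apply abs_sub|]. rewrite Rabs_mult.
    assert (Rabs h * Rabs (F (T - INR k * h) a' (Ps b') - F (T - INR k * h) a (Ps b)) <= Rabs h * e1).
    { apply Rmult_le_compat_l; [apply Rabs_pos| lra]. }
    assert (Rabs h * e1 <= eps / 2).
    { pose proof (Rabs_pos h). unfold e1, Rdiv. apply (Rmult_le_reg_r (2 * (Rabs h + 1))); [lra|].
      rewrite Rmult_assoc, Rmult_assoc, Rinv_l by lra. nra. }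
    lra.
Qed.

Lemma UV_stepV h w j : Rabs (snd (UV h w (S j)) - snd (UV h w j)) <= Rabs h * c.
Proof.
simpl. replace (snd (UV h w j) - h * F (T - INR j * h) (fst (UV h w j)) (Ps (snd (UV h w j))) - snd (UV h w j))
  with (- (h * F (T - INR j * h) (fst (UV h w j)) (Ps (snd (UV h w j))))) by ring.
rewrite Rabs_Ropp, Rabs_mult. apply Rmult_le_compat_l; [apply Rabs_pos| apply HF].
Qed.

Lemma UV_stepU h w j : Rabs (fst (UV h w (S j)) - fst (UV h w j)) <= Rabs h * K.
Proof.
simpl. replace (fst (UV h w j) - h * Ps (snd (UV h w j)) - fst (UV h w j))
  with (- (h * Ps (snd (UV h w j)))) by ring.
rewrite Rabs_Ropp, Rabs_mult. apply Rmult_le_compat_l; [apply Rabs_pos| apply HP].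
Qed.

Lemma UV_boundV h w k : Rabs (snd (UV h w k) - w) <= INR k * (Rabs h * c).
Proof.
pose proof (diff_lemma (fun j => snd (UV h w j)) _ (UV_stepV h w) 0 k). simpl in H. exact H.
Qed.

Lemma UV_boundU h w k : Rabs (fst (UV h w k) - Ps w) <= INR k * (Rabs h * K).
Proof.
pose proof (diff_lemma (fun j => fst (UV h w j)) _ (UV_stepU h w) 0 k). simpl in H. exact H.
Qed.

Lemma sign_lemma h w n : 0 <= h -> INR n * h <= T ->
  (w = c * T -> sg * (fst (UV h w n) - Ps w) <= 0) /\
  (w = - (c * T) -> 0 <= sg * (fst (UV h w n) - Ps w)).
Proof.
intros Hh Hn. induction n as [|n IH].
- simpl. split; intros; replace (Ps w - Ps w) with 0 by ring; lra.
- rewrite S_INR in Hn. assert (Hn' : INR n * h <= T) by nra. destruct (IH Hn') as [IH1 IH2].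
  assert (HV := UV_boundV h w n). rewrite (Rabs_pos_eq h) in HV by exact Hh.
  assert (HV' : INR n * (h * c) <= c * T) by nra.
  simpl. split; intro Hw.
  + specialize (IH1 Hw). assert (0 <= sg * Ps (snd (UV h w n))).
    { apply Hs1. apply abs_le in HV. lra. }
    replace (sg * (fst (UV h w n) - h * Ps (snd (UV h w n)) - Ps w))
       with (sg * (fst (UV h w n) - Ps w) - h * (sg * Ps (snd (UV h w n)))) by ring. nra.
  + specialize (IH2 Hw). assert (sg * Ps (snd (UV h w n)) <= 0).
    { apply Hs2. apply abs_le in HV. lra. }
    replace (sg * (fst (UV h w n) - h * Ps (snd (UV h w n)) - Ps w))
       with (sg * (fst (UV h w n) - Ps w) - h * (sg * Ps (snd (UV h w n)))) by ring. nra.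
Qed.

Definition hN (N : nat) := T / INR (S N).

Lemma hN_pos N : 0 < hN N.
Proof. unfold hN. apply Rdiv_lt_0_compat; [lra| apply lt_0_INR; lia]. Qed.

Lemma hN_mul N : hN N * INR (S N) = T.
Proof. unfold hN. field. apply not_0_INR; lia. Qed.

Lemma root_exists N : exists w, - (c * T) <= w <= c * T /\ fst (UV (hN N) w (S N)) = Ps w.
Proof.
destruct (UV_cont (hN N) (S N)) as [C1 _].
set (G := fun w => sg * (fst (UV (hN N) w (S N)) - Ps w)).
assert (CG : continuity G).
{ unfold G. apply (cont2 (fun w => fst (UV (hN N) w (S N))) Ps (fun a b => sg * (a - b))); auto.
  intros a b eps Heps. exists (eps / (2 * (Rabs sg + 1))). split.
  { apply Rdiv_lt_0_compat; [lra|]. pose proof (Rabs_pos sg); lra. }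
  intros a' b' Ha Hb. replace (sg * (a' - b') - sg * (a - b)) with (sg * ((a' - a) - (b' - b))) by ring.
  rewrite Rabs_mult. pose proof (Rabs_pos sg). 
  assert (Rabs (a' - a - (b' - b)) < 2 * (eps / (2 * (Rabs sg + 1)))).
  { eapply Rle_lt_trans; [apply abs_sub|]. lra. }
  assert (Rabs sg * Rabs (a' - a - (b' - b)) <= Rabs sg * (2 * (eps / (2 * (Rabs sg + 1))))) by
    (apply Rmult_le_compat_l; lra).
  assert (Rabs sg * (2 * (eps / (2 * (Rabs sg + 1)))) < eps).
  { replace (Rabs sg * (2 * (eps / (2 * (Rabs sg + 1))))) with (eps * (Rabs sg / (Rabs sg + 1))) by (field; lra).
    assert (Rabs sg / (Rabs sg + 1) < 1). { apply (Rmult_lt_reg_r (Rabs sg + 1)); [lra|].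
      unfold Rdiv. rewrite Rmult_assoc, Rinv_l by lra. lra. }
    nra. }
  lra. }
assert (Hh := hN_pos N). assert (Hm := hN_mul N).
destruct (sign_lemma (hN N) (c * T) (S N) ltac:(lra) ltac:(lra)) as [S1 _].
destruct (sign_lemma (hN N) (- (c * T)) (S N) ltac:(lra) ltac:(lra)) as [_ S2].
specialize (S1 eq_refl). specialize (S2 eq_refl).
assert (HcT : 0 <= c * T) by nra.
destruct (IVT_cor G (- (c * T)) (c * T) CG ltac:(lra)) as [z [Hz1 Hz2]].
{ unfold G. nra. }
exists z. split; [exact Hz1|]. unfold G in Hz2.
apply Rmult_integral in Hz2. destruct Hz2 as [Hz2|Hz2]; [contradiction| lra].
Qed.


Definition wN (N : nat) : R := proj1_sig (constructive_indefinite_description _ (root_exists N)).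

Lemma wN_spec N : - (c * T) <= wN N <= c * T /\ fst (UV (hN N) (wN N) (S N)) = Ps (wN N).
Proof. unfold wN. destruct (constructive_indefinite_description _ (root_exists N)) as [w Hw]. exact Hw. Qed.

Definition UN N k := fst (UV (hN N) (wN N) k).
Definition VN N k := snd (UV (hN N) (wN N) k).
Definition kN N s := idx T (hN N) s (S N).

Lemma UN_S N j : UN N (S j) = UN N j - hN N * Ps (VN N j).
Proof. reflexivity. Qed.

Lemma VN_S N j : VN N (S j) = VN N j - hN N * F (T - INR j * hN N) (UN N j) (Ps (VN N j)).
Proof. reflexivity. Qed.

Lemma kN_spec N s : 0 <= s <= T ->
  (kN N s <= S N)%nat /\ INR (kN N s) * hN N <= T - s < (INR (kN N s) + 1) * hN N.
Proof. intros Hs. apply idx_spec; auto. apply hN_pos. rewrite <- (hN_mul N). ring. Qed.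

Lemma kN_le N s : (kN N s <= S N)%nat.
Proof. unfold kN, idx. lia. Qed.

Lemma kh_le N k : (k <= S N)%nat -> INR k * hN N <= T.
Proof.
intros Hk. rewrite <- (hN_mul N). rewrite Rmult_comm. apply Rmult_le_compat_l.
apply Rlt_le, hN_pos. apply le_INR; auto.
Qed.

Lemma VN_bound N k : (k <= S N)%nat -> Rabs (VN N k) <= 2 * c * T.
Proof.
intros Hk. pose proof (UV_boundV (hN N) (wN N) k) as H. fold (VN N k) in H.
rewrite (Rabs_pos_eq (hN N)) in H by (apply Rlt_le, hN_pos).
pose proof (kh_le N k Hk). pose proof (wN_spec N) as [Hw _].
assert (INR k * (hN N * c) <= c * T) by (rewrite <- Rmult_assoc; rewrite (Rmult_comm c T); nra).
apply abs_le in H. apply le_abs. lra.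
Qed.

Lemma UN_bound N k : (k <= S N)%nat -> Rabs (UN N k) <= K + T * K.
Proof.
intros Hk. pose proof (UV_boundU (hN N) (wN N) k) as H. fold (UN N k) in H.
rewrite (Rabs_pos_eq (hN N)) in H by (apply Rlt_le, hN_pos).
pose proof (kh_le N k Hk) as Hkh. pose proof (HP (wN N)) as Hpw.
assert (INR k * (hN N * K) <= T * K) by (rewrite <- Rmult_assoc; nra).
apply abs_le in H. apply abs_le in Hpw. apply le_abs. lra.
Qed.

Definition gseq (N : nat) (i : bool * R) : R :=
  let (b, s) := i in if b then UN N (kN N s) else VN N (kN N s).

Lemma gseq_bound N i : Rabs (gseq N i) <= 2 * c * T + (K + T * K).
Proof.
destruct i as [[|] s]; simpl.
- pose proof (UN_bound N _ (kN_le N s)). assert (0 <= c * T) by nra. lra.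
- pose proof (VN_bound N _ (kN_le N s)). assert (0 <= K + T * K) by nra. lra.
Qed.

Lemma limit_exists : exists u v : R -> R, forall s t eps, 0 <= s <= T -> 0 <= t <= T -> 0 < eps ->
  exists N, hN N < eps /\
    Rabs (UN N (kN N s) - u s) < eps /\ Rabs (VN N (kN N s) - v s) < eps /\
    Rabs (UN N (kN N t) - u t) < eps /\ Rabs (VN N (kN N t) - v t) < eps.
Proof.
destruct (Clu.cluster_exists gseq _ gseq_bound) as [p Hp].
exists (fun s => p (true, s)), (fun s => p (false, s)).
intros s t eps Hs Ht He.
destruct (small_h T eps HT He) as [N0 HN0].
destruct (Hp (true, s) (false, s) (true, t) (false, t) eps N0 He) as [N [HN [H1 [H2 [H3 H4]]]]].
exists N. split; [|simpl in *; tauto].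
unfold hN. apply Rle_lt_trans with (T / INR (S N0)); auto.
unfold Rdiv. apply Rmult_le_compat_l; [lra|]. apply Rinv_le_contravar.
apply lt_0_INR; lia. apply le_INR; lia.
Qed.

Lemma VN_diff N k j : Rabs (VN N k - VN N j) <= Rabs (INR k - INR j) * (hN N * c).
Proof.
apply (gen_diff (VN N)). intro i. pose proof (UV_stepV (hN N) (wN N) i) as H.
rewrite (Rabs_pos_eq (hN N)) in H by (apply Rlt_le, hN_pos). exact H.
Qed.

Lemma UN_diff N k j : Rabs (UN N k - UN N j) <= Rabs (INR k - INR j) * (hN N * K).
Proof.
apply (gen_diff (UN N)). intro i. pose proof (UV_stepU (hN N) (wN N) i) as H.
rewrite (Rabs_pos_eq (hN N)) in H by (apply Rlt_le, hN_pos). exact H.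
Qed.

Lemma kN_T N : kN N T = O.
Proof.
destruct (kN_spec N T ltac:(lra)) as [_ [H1 _]]. pose proof (hN_pos N).
assert (INR (kN N T) <= 0) by nra. destruct (kN N T); auto. rewrite S_INR in H0. pose proof (pos_INR n). lra.
Qed.

Lemma kN_0 N : kN N 0 = S N.
Proof.
destruct (kN_spec N 0 ltac:(lra)) as [Hle [_ H2]]. pose proof (hN_pos N). pose proof (hN_mul N).
assert (INR (S N) < INR (kN N 0) + 1) by nra.
rewrite <- S_INR in H1. apply INR_lt in H1. lia.
Qed.

Theorem core : exists u v : R -> R,
  (forall t, 0 <= t <= T -> Rabs (v t) <= 2 * c * T) /\
  (forall s t, 0 <= s <= T -> 0 <= t <= T -> Rabs (v t - v s) <= c * Rabs (t - s)) /\
  (forall s t, 0 <= s <= T -> 0 <= t <= T -> Rabs (u t - u s) <= K * Rabs (t - s)) /\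
  has_derivative_on_interval u (fun t => Ps (v t)) 0 T /\
  has_derivative_on_interval v (fun t => F t (u t) (Ps (v t))) 0 T /\
  u T = u 0 /\ u T = Ps (v T).
Proof.
destruct limit_exists as [u [v Hl]].
exists u, v. split; [|split; [|split; [|split; [|split; [|split]]]]].
-
  intros t Ht. apply Rle_plus_epsilon. intros e He.
  destruct (Hl t t e Ht Ht He) as [N [_ [_ [H _]]]].
  pose proof (VN_bound N _ (kN_le N t)). apply abs_lt in H. apply abs_le in H0. apply le_abs. lra.
-
  intros s t Hs Ht. apply Rle_plus_epsilon. intros e He.
  destruct (Hl s t (e / (c + 3)) Hs Ht ltac:(apply Rdiv_lt_0_compat; lra)) as [N [Hh [_ [H1 [_ H2]]]]].
  destruct (kN_spec N s Hs) as [_ Ss]. destruct (kN_spec N t Ht) as [_ St].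
  destruct (idx_dist T (hN N) s t _ _ Ss St) as [I1 _].
  pose proof (VN_diff N (kN N t) (kN N s)) as D.
  assert (Rabs (INR (kN N t) - INR (kN N s)) * (hN N * c) <= (Rabs (t - s) + hN N) * c).
  { rewrite <- Rmult_assoc. apply Rmult_le_compat_r; lra. }
  replace (v t - v s) with ((v t - VN N (kN N t)) + (VN N (kN N t) - VN N (kN N s)) + (VN N (kN N s) - v s)) by ring.
  rewrite Rabs_minus_sym in H2.
  assert (e / (c + 3) * (c + 3) = e) by (field; lra).
  assert (hN N * c <= e / (c + 3) * c) by (apply Rmult_le_compat_r; lra).
  eapply Rle_trans; [apply Rabs_triang|].
  eapply Rle_trans; [apply Rplus_le_compat_r; apply Rabs_triang|]. nra.
-
  intros s t Hs Ht. apply Rle_plus_epsilon. intros e He.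
  destruct (Hl s t (e / (K + 3)) Hs Ht ltac:(apply Rdiv_lt_0_compat; lra)) as [N [Hh [H1 [_ [H2 _]]]]].
  destruct (kN_spec N s Hs) as [_ Ss]. destruct (kN_spec N t Ht) as [_ St].
  destruct (idx_dist T (hN N) s t _ _ Ss St) as [I1 _].
  pose proof (UN_diff N (kN N t) (kN N s)) as D.
  assert (Rabs (INR (kN N t) - INR (kN N s)) * (hN N * K) <= (Rabs (t - s) + hN N) * K).
  { rewrite <- Rmult_assoc. apply Rmult_le_compat_r; lra. }
  replace (u t - u s) with ((u t - UN N (kN N t)) + (UN N (kN N t) - UN N (kN N s)) + (UN N (kN N s) - u s)) by ring.
  rewrite Rabs_minus_sym in H2.
  assert (e / (K + 3) * (K + 3) = e) by (field; lra).
  assert (hN N * K <= e / (K + 3) * K) by (apply Rmult_le_compat_r; lra).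
  eapply Rle_trans; [apply Rabs_triang|].
  eapply Rle_trans; [apply Rplus_le_compat_r; apply Rabs_triang|]. nra.
-
  intros s Hs eps He.
  destruct (cont_pt_elim Ps (v s) (HPc (v s)) (eps / 2) ltac:(lra)) as [d2 [Hd2 HP2]].
  set (dl := d2 / (4 * (c + 1))).
  assert (Hdl : 0 < dl) by (unfold dl; apply Rdiv_lt_0_compat; lra).
  exists dl. split; auto. intros t Ht Hne Htd.
  set (d := Rabs (t - s)). assert (Hd : 0 < d) by (apply Rabs_pos_lt; lra).
  assert (Hdd : d < dl) by exact Htd.
  set (eta := Rmin dl (eps * d / (4 * (2 + eps + 2 * K)))).
  assert (Heta : 0 < eta). { unfold eta. apply Rmin_pos; auto. apply Rdiv_lt_0_compat; nra. }
  assert (Eta1 : eta <= dl) by apply Rmin_l.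
  assert (Eta2 : eta * (2 + eps + 2 * K) <= eps * d / 4).
  { unfold eta. apply Rle_trans with (eps * d / (4 * (2 + eps + 2 * K)) * (2 + eps + 2 * K)).
    apply Rmult_le_compat_r; [lra| apply Rmin_r]. right; field; lra. }
  destruct (Hl s t eta Hs Ht Heta) as [N [Hh [H1 [H2 [H3 H4]]]]].
  destruct (kN_spec N s Hs) as [_ Ss]. destruct (kN_spec N t Ht) as [_ St].
  pose proof (hN_pos N) as Hhp.
  assert (Hc4 : (c + 1) * (4 * dl) = d2) by (unfold dl; field; lra).
  assert (HY : forall j, (Nat.min (kN N s) (kN N t) <= j < Nat.max (kN N s) (kN N t))%nat ->
              Rabs (Ps (VN N j) - Ps (v s)) <= eps / 2).
  { intros j Hj. destruct (between_facts T (hN N) s t _ _ j Ss St ltac:(lia)) as [B1 _]. fold d in B1.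
    apply Rlt_le, HP2.
    pose proof (VN_diff N j (kN N s)) as Dj.
    assert (Rabs (INR j - INR (kN N s)) * (hN N * c) <= (d + hN N) * c).
    { rewrite <- Rmult_assoc. apply Rmult_le_compat_r; lra. }
    replace (VN N j - v s) with ((VN N j - VN N (kN N s)) + (VN N (kN N s) - v s)) by ring.
    assert (d * c <= dl * c) by (apply Rmult_le_compat_r; lra).
    assert (hN N * c <= dl * c) by (apply Rmult_le_compat_r; lra).
    eapply Rle_lt_trans; [apply Rabs_triang|]. nra. }
  pose proof (deriv_core (UN N) (fun j => Ps (VN N j)) u (Ps (v s)) K (hN N) s t (eps/2) eta T
     (kN N s) (kN N t) Hhp ltac:(lra) (HP _) (UN_S N) HY Ss St H1 H3) as DC.
  fold d in DC. apply quot_bound; auto. fold d.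
  assert (0 < eps * d) by (apply Rmult_lt_0_compat; lra).
  assert (0 <= eta * eps) by nra.
  assert (hN N * (eps / 2) <= eta * (eps / 2)) by (apply Rmult_le_compat_r; lra).
  assert (K * hN N <= K * eta) by (apply Rmult_le_compat_l; lra).
  nra.
-
  intros s Hs eps He.
  destruct (HFc s (u s) (Ps (v s)) (eps / 2) ltac:(lra)) as [d1 [Hd1 HF1]].
  destruct (cont_pt_elim Ps (v s) (HPc (v s)) d1 Hd1) as [d2 [Hd2 HP2]].
  set (dl := Rmin (d1 / (4 * (K + 1))) (d2 / (4 * (c + 1)))).
  assert (Hdl : 0 < dl) by (unfold dl; apply Rmin_pos; apply Rdiv_lt_0_compat; lra).
  assert (Hdl1 : (K + 1) * (4 * dl) <= d1).
  { apply Rle_trans with ((K + 1) * (4 * (d1 / (4 * (K + 1))))).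
    apply Rmult_le_compat_l; [lra|]. apply Rmult_le_compat_l; [lra| apply Rmin_l]. right; field; lra. }
  assert (Hdl2 : (c + 1) * (4 * dl) <= d2).
  { apply Rle_trans with ((c + 1) * (4 * (d2 / (4 * (c + 1))))).
    apply Rmult_le_compat_l; [lra|]. apply Rmult_le_compat_l; [lra| apply Rmin_r]. right; field; lra. }
  exists dl. split; auto. intros t Ht Hne Htd.
  set (d := Rabs (t - s)). assert (Hd : 0 < d) by (apply Rabs_pos_lt; lra).
  assert (Hdd : d < dl) by exact Htd.
  set (eta := Rmin dl (eps * d / (4 * (2 + eps + 2 * c)))).
  assert (Heta : 0 < eta). { unfold eta. apply Rmin_pos; auto. apply Rdiv_lt_0_compat; nra. }
  assert (Eta1 : eta <= dl) by apply Rmin_l.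
  assert (Eta2 : eta * (2 + eps + 2 * c) <= eps * d / 4).
  { unfold eta. apply Rle_trans with (eps * d / (4 * (2 + eps + 2 * c)) * (2 + eps + 2 * c)).
    apply Rmult_le_compat_r; [lra| apply Rmin_r]. right; field; lra. }
  destruct (Hl s t eta Hs Ht Heta) as [N [Hh [H1 [H2 [H3 H4]]]]].
  destruct (kN_spec N s Hs) as [_ Ss]. destruct (kN_spec N t Ht) as [_ St].
  pose proof (hN_pos N) as Hhp.
  assert (HY : forall j, (Nat.min (kN N s) (kN N t) <= j < Nat.max (kN N s) (kN N t))%nat ->
              Rabs (F (T - INR j * hN N) (UN N j) (Ps (VN N j)) - F s (u s) (Ps (v s))) <= eps / 2).
  { intros j Hj. destruct (between_facts T (hN N) s t _ _ j Ss St ltac:(lia)) as [B1 B2]. fold d in B1, B2.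
    apply Rlt_le, HF1.
    - assert (0 <= K) by lra. nra.
    - pose proof (UN_diff N j (kN N s)) as Dj.
      assert (Rabs (INR j - INR (kN N s)) * (hN N * K) <= (d + hN N) * K).
      { rewrite <- Rmult_assoc. apply Rmult_le_compat_r; lra. }
      replace (UN N j - u s) with ((UN N j - UN N (kN N s)) + (UN N (kN N s) - u s)) by ring.
      assert (d * K <= dl * K) by (apply Rmult_le_compat_r; lra).
      assert (hN N * K <= dl * K) by (apply Rmult_le_compat_r; lra).
      eapply Rle_lt_trans; [apply Rabs_triang|]. nra.
    - apply HP2.
      pose proof (VN_diff N j (kN N s)) as Dj.
      assert (Rabs (INR j - INR (kN N s)) * (hN N * c) <= (d + hN N) * c).
      { rewrite <- Rmult_assoc. apply Rmult_le_compat_r; lra. }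
      replace (VN N j - v s) with ((VN N j - VN N (kN N s)) + (VN N (kN N s) - v s)) by ring.
      assert (d * c <= dl * c) by (apply Rmult_le_compat_r; lra).
      assert (hN N * c <= dl * c) by (apply Rmult_le_compat_r; lra).
      eapply Rle_lt_trans; [apply Rabs_triang|]. nra. }
  pose proof (deriv_core (VN N) (fun j => F (T - INR j * hN N) (UN N j) (Ps (VN N j))) v
     (F s (u s) (Ps (v s))) c (hN N) s t (eps/2) eta T
     (kN N s) (kN N t) Hhp ltac:(lra) (HF _ _ _) (VN_S N) HY Ss St H2 H4) as DC.
  fold d in DC. apply quot_bound; auto. fold d.
  assert (0 < eps * d) by (apply Rmult_lt_0_compat; lra).
  assert (0 <= eta * eps) by nra.
  assert (hN N * (eps / 2) <= eta * (eps / 2)) by (apply Rmult_le_compat_r; lra).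
  assert (c * hN N <= c * eta) by (apply Rmult_le_compat_l; lra).
  nra.
-
  assert (HT0 : 0 <= T <= T) by lra. assert (H00 : 0 <= 0 <= T) by lra.
  apply Rminus_diag_uniq. apply abs_small. intros e He.
  destruct (Hl T 0 (e / 2) HT0 H00 ltac:(lra)) as [N [_ [H1 [_ [H3 _]]]]].
  rewrite kN_T in H1. rewrite kN_0 in H3.
  assert (UN N (S N) = UN N O) by (unfold UN; rewrite (proj2 (wN_spec N)); reflexivity).
  rewrite H in H3.
  replace (u T - u 0) with (- (UN N O - u T) + (UN N O - u 0)) by ring.
  eapply Rle_trans; [apply Rabs_triang|]. rewrite Rabs_Ropp. lra.
-
  assert (HT0 : 0 <= T <= T) by lra.
  apply Rminus_diag_uniq. apply abs_small. intros e He.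
  destruct (cont_pt_elim Ps (v T) (HPc (v T)) (e / 2) ltac:(lra)) as [d [Hd HPd]].
  destruct (Hl T T (Rmin d (e / 2)) HT0 HT0 ltac:(apply Rmin_pos; lra)) as [N [_ [H1 [H2 _]]]].
  rewrite kN_T in H1, H2.
  assert (UN N O = Ps (VN N O)) by reflexivity.
  assert (A1 : Rabs (Ps (VN N O) - Ps (v T)) < e / 2).
  { apply HPd. eapply Rlt_le_trans; [exact H2| apply Rmin_l]. }
  assert (A2 : Rabs (UN N O - u T) < e / 2) by (eapply Rlt_le_trans; [exact H1| apply Rmin_r]).
  replace (u T - Ps (v T)) with (- (UN N O - u T) + (Ps (VN N O) - Ps (v T))) by (rewrite H; ring).
  eapply Rle_trans; [apply Rabs_triang|]. rewrite Rabs_Ropp. lra.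
Qed.

End Core.


Section Sign.
Variables (a : R) (phi psi : R -> R).
Hypothesis Ha : 0 < a.
Hypothesis Hcont : continuity phi.
Hypothesis Hpsi1 : forall x, psi (phi x) = x.
Hypothesis Hpsi2 : forall y, - a < y < a -> phi (psi y) = y.
Hypothesis Hphi0 : phi 0 = 0.

Lemma phi_zero x : phi x = 0 -> x = 0.
Proof. intros H. rewrite <- (Hpsi1 x), H. rewrite <- Hphi0 at 1. apply Hpsi1. Qed.

Lemma phi_same x y : 0 < x * y -> 0 < phi x * phi y.
Proof.
intros Hxy. destruct (Rlt_le_dec 0 (phi x * phi y)) as [|Hn]; auto. exfalso.
destruct (Rle_dec x y) as [Hle|Hle].
- destruct (IVT_cor phi x y Hcont Hle Hn) as [z [Hz1 Hz2]].
  apply phi_zero in Hz2. subst z. nra.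
- destruct (IVT_cor phi y x Hcont ltac:(lra) ltac:(rewrite Rmult_comm; exact Hn)) as [z [Hz1 Hz2]].
  apply phi_zero in Hz2. subst z. nra.
Qed.

Lemma phi_opp x y : x * y < 0 -> phi x * phi y < 0.
Proof.
intros Hxy. destruct (Rlt_le_dec (phi x * phi y) 0) as [|Hn]; auto. exfalso.
assert (Hx0 : x <> 0) by (intro; subst; lra). assert (Hy0 : y <> 0) by (intro; subst; lra).
assert (Hpx : phi x <> 0) by (intro E; apply phi_zero in E; auto).
assert (Hpy : phi y <> 0) by (intro E; apply phi_zero in E; auto).
assert (HAB : 0 < phi x * phi y).
{ destruct Hn as [|Hn]; auto. symmetry in Hn. apply Rmult_integral in Hn. tauto. }
set (p := psi (a / 2)). set (q := psi (- (a / 2))).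
assert (Hp : phi p = a / 2) by (apply Hpsi2; lra).
assert (Hq : phi q = - (a / 2)) by (apply Hpsi2; lra).
assert (p <> 0) by (intro E; rewrite E, Hphi0 in Hp; lra).
assert (q <> 0) by (intro E; rewrite E, Hphi0 in Hq; lra).
assert (Sp : 0 < phi x * phi p \/ 0 < phi y * phi p).
{ destruct (Rtotal_order (x * p) 0) as [Hl|[He|Hg]].
  - right. apply phi_same. nra.
  - apply Rmult_integral in He; tauto.
  - left. apply phi_same. auto. }
assert (Sq : 0 < phi x * phi q \/ 0 < phi y * phi q).
{ destruct (Rtotal_order (x * q) 0) as [Hl|[He|Hg]].
  - right. apply phi_same. nra.
  - apply Rmult_integral in He; tauto.
  - left. apply phi_same. auto. }
rewrite Hp in Sp. rewrite Hq in Sq.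
destruct Sp; destruct Sq; nra.
Qed.

Lemma psi_sign1 v w : - a < v < a -> - a < w < a -> 0 <= v * w -> 0 <= psi v * psi w.
Proof.
intros Hv Hw H. destruct (Rle_lt_dec 0 (psi v * psi w)) as [|Hl]; auto.
apply phi_opp in Hl. rewrite !Hpsi2 in Hl by auto. lra.
Qed.

Lemma psi_sign2 v w : - a < v < a -> - a < w < a -> v * w <= 0 -> psi v * psi w <= 0.
Proof.
intros Hv Hw H. destruct (Rle_lt_dec (psi v * psi w) 0) as [|Hl]; auto.
apply phi_same in Hl. rewrite !Hpsi2 in Hl by auto. lra.
Qed.
End Sign.

Theorem theorem4p1 (T a : R) (phi : R -> R) (f : R -> R -> R -> R) :
  0 < T -> 0 < a ->
  homeomorphism_onto_interval phi a -> phi 0 = 0 ->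
  continuous_on_strip f T ->
  (exists c : R, c < a / (2 * T) /\
     forall t x y, 0 <= t <= T -> Rabs (f t x y) <= c) ->
  exists u : R -> R, is_solution phi f T u.
Proof.
intros HT Ha [Hcont [Hrange [psi [Hpsi1 [Hpsi2 Hpsi3]]]]] Hphi0 Hf [c [Hc1 Hc2]].
assert (Hc : 0 <= c) by (pose proof (Hc2 0 0 0 ltac:(lra)); pose proof (Rabs_pos (f 0 0 0)); lra).
assert (HcT : 2 * c * T < a).
{ apply (Rmult_lt_compat_r (2 * T)) in Hc1; [|lra].
  unfold Rdiv in Hc1. rewrite Rmult_assoc, Rinv_l in Hc1 by lra. lra. }
set (b := (2 * c * T + a) / 2).
assert (Hb1 : 2 * c * T <= b) by (unfold b; lra).
assert (Hb2 : b < a) by (unfold b; lra).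
assert (Hb0 : 0 <= b) by (unfold b; nra).
assert (Hpsic : forall z, - b <= z <= b -> continuity_pt psi z) by (intros z Hz; apply Hpsi3; lra).
destruct (continuity_ab_maj psi (- b) b ltac:(lra) Hpsic) as [Mx [HMx _]].
destruct (continuity_ab_min psi (- b) b ltac:(lra) Hpsic) as [mx [Hmx _]].
set (K := Rabs (psi Mx) + Rabs (psi mx)).
assert (HK : 0 <= K) by (unfold K; pose proof (Rabs_pos (psi Mx)); pose proof (Rabs_pos (psi mx)); lra).
set (Ps := fun v => psi (clamp (- b) b v)).
set (F := fun t x y => f (clamp 0 T t) x y).
assert (HP : forall v, Rabs (Ps v) <= K).
{ intro v. unfold Ps. pose proof (clamp_in (- b) b v ltac:(lra)).
  pose proof (HMx _ H). pose proof (Hmx _ H). apply le_abs. unfold K. rabs. }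
assert (HPc : continuity Ps).
{ intro x. apply cont_pt_intro. intros eps He.
  destruct (cont_pt_elim psi _ (Hpsic _ (clamp_in (- b) b x ltac:(lra))) eps He) as [d [Hd Hd']].
  exists d. split; auto. intros y Hy. apply Hd'.
  eapply Rle_lt_trans; [apply clamp_lip; lra| exact Hy]. }
assert (HF : forall t x y, Rabs (F t x y) <= c).
{ intros. apply Hc2. apply clamp_in; lra. }
assert (HFc : forall t x y eps, 0 < eps -> exists d, 0 < d /\ forall t' x' y',
  Rabs (t' - t) < d -> Rabs (x' - x) < d -> Rabs (y' - y) < d -> Rabs (F t' x' y' - F t x y) < eps).
{ intros t x y eps He. destruct (Hf (clamp 0 T t) x y (clamp_in 0 T t ltac:(lra)) eps He) as [d [Hd Hd']].
  exists d. split; auto. intros t' x' y' H1 H2 H3. apply Hd'; auto. apply clamp_in; lra.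
  eapply Rle_lt_trans; [apply clamp_lip; lra| exact H1]. }
set (sg := psi (a / 2)).
assert (Hsg : sg <> 0).
{ intro E. unfold sg in E. assert (phi (psi (a/2)) = a / 2) by (apply Hpsi2; lra).
  rewrite E, Hphi0 in H. lra. }
assert (Hs1 : forall v, 0 <= v <= 2 * c * T -> 0 <= sg * Ps v).
{ intros v Hv. unfold sg, Ps. rewrite clamp_id by lra.
  apply (psi_sign1 a phi psi Ha Hcont Hpsi1 Hpsi2 Hphi0); nra. }
assert (Hs2 : forall v, - (2 * c * T) <= v <= 0 -> sg * Ps v <= 0).
{ intros v Hv. unfold sg, Ps. rewrite clamp_id by lra.
  apply (psi_sign2 a phi psi Hcont Hpsi1 Hpsi2 Hphi0); nra. }
destruct (core T c K sg F Ps HT Hc HK HF HFc HP HPc Hsg Hs1 Hs2)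
  as [u [v [Hvb [Hvl [Hul [Hdu [Hdv [HuT HuT2]]]]]]]].
exists u, (fun t => Ps (v t)), (fun t => F t (u t) (Ps (v t))).
assert (Hphiv : forall t, 0 <= t <= T -> phi (Ps (v t)) = v t).
{ intros t Ht. pose proof (Hvb t Ht). apply abs_le in H. unfold Ps.
  rewrite clamp_id by lra. apply Hpsi2; lra. }
split; [exact Hdu|]. split; [|split; [|split; [|split; [|split]]]].
- intros t Ht eps He.
  destruct (cont_pt_elim Ps (v t) (HPc (v t)) eps He) as [d [Hd Hd']].
  exists (d / (c + 1)). split; [apply Rdiv_lt_0_compat; lra|].
  intros s Hs Hst. apply Hd'. eapply Rle_lt_trans; [apply (Hvl t s Ht Hs)|].
  apply Rle_lt_trans with ((c + 1) * Rabs (s - t)). { pose proof (Rabs_pos (s - t)); nra. }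
  apply (Rmult_lt_reg_r (/ (c + 1))). apply Rinv_0_lt_compat; lra.
  replace ((c + 1) * Rabs (s - t) * / (c + 1)) with (Rabs (s - t)) by (field; lra). exact Hst.
- intros t Ht eps He. destruct (Hdv t Ht eps He) as [d [Hd Hd']].
  exists d. split; auto. intros s Hs Hne Hst. rewrite !Hphiv by auto. apply Hd'; auto.
- intros t Ht eps He.
  destruct (HFc t (u t) (Ps (v t)) eps He) as [d1 [Hd1 Hd1']].
  destruct (cont_pt_elim Ps (v t) (HPc (v t)) d1 Hd1) as [d2 [Hd2 Hd2']].
  set (dl := Rmin d1 (Rmin (d1 / (K + 1)) (d2 / (c + 1)))).
  assert (Hdl : 0 < dl) by (unfold dl; repeat apply Rmin_pos; try apply Rdiv_lt_0_compat; lra).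
  exists dl. split; auto. intros s Hs Hst.
  assert (A1 : dl <= d1) by apply Rmin_l.
  assert (A2 : dl * (K + 1) <= d1).
  { apply Rle_trans with (d1 / (K + 1) * (K + 1)). apply Rmult_le_compat_r; [lra|].
    unfold dl. eapply Rle_trans; [apply Rmin_r| apply Rmin_l]. right; field; lra. }
  assert (A3 : dl * (c + 1) <= d2).
  { apply Rle_trans with (d2 / (c + 1) * (c + 1)). apply Rmult_le_compat_r; [lra|].
    unfold dl. eapply Rle_trans; [apply Rmin_r| apply Rmin_r]. right; field; lra. }
  pose proof (Rabs_pos (s - t)).
  apply Hd1'.
  + lra.
  + eapply Rle_lt_trans; [apply (Hul t s Ht Hs)|]. nra.
  + apply Hd2'. eapply Rle_lt_trans; [apply (Hvl t s Ht Hs)|]. nra.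
- intros t Ht. unfold F. rewrite clamp_id by lra. reflexivity.
- exact HuT.
- rewrite <- HuT. exact HuT2.
Qed.
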